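(* Consider a system with a finite set $S$ of tasks and minimum average reward requirements $q^*_X>0$ (as in the context), and a scheduling policy $\eta$ under which the evolution of the system state $D(k)=[d_X(k) : X\in S]$, $k=0,1,2,\dots$, is a Markov chain. If this Markov chain is irreducible and positive recurrent, then the system is fulfilled by $\eta$.
   Context: A system consists of a finite set $S$ of tasks. Time is slotted, $t\in\{0,1,2,\dots\}$. Each task $X\in S$ has a period $\tau_X$ (a positive integer); time is partitioned into consecutive periods of $X$ of $\tau_X$ slots each, the first starting at $t=0$, and in each period $X$ has one job, removed at the end of the period. Let $T=\mathrm{lcm}\{\tau_X : X\in S\}$; time is partitioned into consecutive frames of $T$ slots each, the $k$-th frame ($k=1,2,\dots$) being the $k$-th such block starting from $t=0$. A scheduling policy (possibly randomized) chooses in each slot either to idle or to execute the job of exactly one task. Each task $X$ has rewards $r^1_X\ge r^2_X\ge\dots\ge r^{\tau_X}_X\ge 0$: executing the job of $X$ for the $i$-th time within a period yields reward $r^i_X$ to $X$. Let $s_X(t)$ be the total reward obtained by $X$ between time 0 and $t$; the average reward is $q_X=\liminf_{t\to\infty}s_X(t)/(t/T)$. Each task has a requirement $q^*_X>0$; a policy fulfills the system if $q_X\ge q^*_X$ with probability 1 for all $X\in S$. Let $\tilde q_X(k)$ be the total reward obtained by $X$ during the $k$-th frame. The debt of $X$ is defined by $d_X(0)=0$ and $d_X(k)=[d_X(k-1)+q^*_X-\tilde q_X(k)]^+$ for $k>0$, where $[x]^+=\max\{x,0\}$. The state of the system at frame $k$ is the vector of debts $[d_X(k) : X\in S]$. 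*)

(* Defs.v *)
From HB Require Import structures.
From mathcomp Require Import all_boot all_order all_algebra.
From mathcomp Require Import all_classical all_reals all_analysis.
Set Implicit Arguments. Unset Strict Implicit. Unset Printing Implicit Defensive.
Import Order.TTheory GRing.Theory Num.Theory.
Local Open Scope classical_set_scope.
Local Open Scope ring_scope.
Local Open Scope ereal_scope.

(* A schedule is a map  nat -> option S : at slot t, [None] = idle,
   [Some X] = execute the (current) job of task X. *)

Section System.
Variables (R : realType) (S : finType).
Variables (tau : S -> nat) (r : S -> nat -> R) (qs : S -> R).

(* number of times X has been executed in the current period of X,
   up to and including slot t *)
Definition exec_count (sched : nat -> option S) (X : S) (t : nat) : nat :=
  (\sum_(t - t %% tau X <= u < t.+1) (sched u == Some X))%N.

Definition slot_reward (sched : nat -> option S) (X : S) (t : nat) : R :=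
  if sched t == Some X then r X (exec_count sched X t) else 0%R.

Definition cum_reward (sched : nat -> option S) (X : S) (t : nat) : R :=
  (\sum_(0 <= u < t) slot_reward sched X u)%R.

Definition frame_len : nat := \big[lcmn/1%N]_(X : S) tau X.

Definition frame_reward (sched : nat -> option S) (X : S) (k : nat) : R :=
  (\sum_(k.-1 * frame_len <= u < k * frame_len) slot_reward sched X u)%R.

Fixpoint debt (sched : nat -> option S) (X : S) (k : nat) : R :=
  match k with
  | 0 => 0%R
  | k'.+1 => Num.max 0%R (debt sched X k' + qs X - frame_reward sched X k'.+1)%R
  end.

Definition sys_state (sched : nat -> option S) (k : nat) : {ffun S -> R} :=
  [ffun X => debt sched X k].

Definition avg_reward_meets (sched : nat -> option S) (X : S) : Prop :=
  (qs X)%:E <= limn_einf (fun t => (cum_reward sched X t / (t%:R / (frame_len)%:R))%:E).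

End System.

Section Markov.
Variables (R : realType) (V : choiceType).

Definition is_markov_chain (d : measure_display) (Omega : measurableType d)
  (P : probability Omega R) (D : Omega -> nat -> V) (C : set V) (p : V -> V -> R) : Prop :=
  [/\ countable C,
      (forall w k, C (D w k)),
      (forall x y, (0 <= p x y)%R),
      (forall x, C x -> \esum_(y in C) (p x y)%:E = 1) &
      (forall (k : nat) (x : nat -> V), (forall i, (i <= k.+1)%N -> C (x i)) ->
         P [set w | forall i, (i <= k.+1)%N -> D w i = x i]
         = P [set w | forall i, (i <= k)%N -> D w i = x i] * (p (x k) (x k.+1))%:E)].

Variables (C : set V) (p : V -> V -> R).

Fixpoint nstep (n : nat) (x y : V) : \bar R :=
  match n with
  | 0 => if `[< x = y >] then 1 else 0
  | n'.+1 => \esum_(z in C) (nstep n' x z * (p z y)%:E)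
  end.

Definition irreducible : Prop :=
  forall x y, C x -> C y -> exists n, 0 < nstep n x y.

(* first-passage probabilities: f_n(x,y) = P_x(first visit to y at time n), n >= 1 *)
Fixpoint first_pass (n : nat) (x y : V) : \bar R :=
  match n with
  | 0 => 0
  | n'.+1 => match n' with
             | 0 => (p x y)%:E
             | _ => \esum_(z in C `\ y) ((p x z)%:E * first_pass n' z y)
             end
  end.

Definition positive_recurrent : Prop :=
  forall x, C x ->
    \esum_(n in [set: nat]) first_pass n x x = 1 /\
    \esum_(n in [set: nat]) ((n%:R)%:E * first_pass n x x) < +oo.

End Markov.

(* Main.v *)
Require Import Defs.
From HB Require Import structures.
From mathcomp Require Import all_boot all_order all_algebra.
From mathcomp Require Import all_classical all_reals all_analysis.
From mathcomp Require Import lra zify.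
Import Order.TTheory GRing.Theory Num.Theory.
Local Open Scope classical_set_scope.
Local Open Scope ring_scope.
Set Implicit Arguments. Unset Strict Implicit. Unset Printing Implicit Defensive.
Section PartA.
Variables (R : realType) (S : finType).
Variables (tau : S -> nat) (r : S -> nat -> R) (qs : S -> R).
Hypothesis tau_pos : forall X, (0 < tau X)%N.
Hypothesis r_noninc : forall X i, (1 <= i)%N -> (i < tau X)%N -> r X i.+1 <= r X i.
Hypothesis r_nonneg : forall X, 0 <= r X (tau X).
Hypothesis qs_pos : forall X, 0 < qs X.

Lemma r_ge0 X i : (1 <= i)%N -> (i <= tau X)%N -> 0 <= r X i.
Proof.
move=> i1 itau; move Ej: (tau X - i)%N => j.
elim: j i Ej i1 itau => [|j IH] i Ej i1 itau.
  by have -> : i = tau X by lia.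
apply: le_trans (IH i.+1 _ _ _) _; try lia.
apply: r_noninc; lia.
Qed.

Lemma exec_count_le sched X t : (exec_count tau sched X t <= tau X)%N.
Proof.
rewrite /exec_count; apply: (@leq_trans (\sum_(t - t %% tau X <= u < t.+1) 1)%N).
  by apply: leq_sum => u _; apply: leq_b1.
rewrite sum_nat_const_nat muln1.
have := ltn_pmod t (tau_pos X); have := leq_mod t (tau X); lia.
Qed.

Lemma slot_reward_ge0 sched X t : 0 <= slot_reward tau r sched X t.
Proof.
rewrite /slot_reward; case: eqP => // E; apply: r_ge0; last exact: exec_count_le.
rewrite /exec_count.
have h : (t - t %% tau X <= t)%N by apply: leq_subr.
rewrite (@big_cat_nat _ _ _ t) //= big_nat1 E eqxx /=; lia.
Qed.

Lemma frame_reward_ge0 sched X k : 0 <= frame_reward tau r sched X k.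
Proof. by rewrite /frame_reward; apply: sumr_ge0 => u _; apply: slot_reward_ge0. Qed.

Lemma cum_reward_mono sched X t1 t2 : (t1 <= t2)%N ->
  cum_reward tau r sched X t1 <= cum_reward tau r sched X t2.
Proof.
move=> h; rewrite /cum_reward (big_cat_nat _ h) //= lerDl.
by apply: sumr_ge0 => u _; apply: slot_reward_ge0.
Qed.

Lemma debt_ge0 sched X k : 0 <= debt tau r qs sched X k.
Proof. by case: k => //= k; rewrite le_max lexx. Qed.

Lemma debt_step sched X k :
  debt tau r qs sched X k.+1 <= debt tau r qs sched X k + qs X.
Proof.
rewrite /= ge_max; apply/andP; split.
  by rewrite addr_ge0 ?debt_ge0 // ltW.
by rewrite lerBlDr lerDl frame_reward_ge0.
Qed.

Lemma cum_frames sched X k :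
  (k%:R * qs X - debt tau r qs sched X k <= cum_reward tau r sched X (k * frame_len tau))%R.
Proof.
elim: k => [|k IH]; first by rewrite /= mul0r subr0 mul0n /cum_reward big_geq.
have h : (k * frame_len tau <= k.+1 * frame_len tau)%N by rewrite leq_mul2r leqnSn orbT.
rewrite /cum_reward (big_cat_nat _ h) //=.
have H1 : debt tau r qs sched X k + qs X - frame_reward tau r sched X k.+1
   <= debt tau r qs sched X k.+1 by rewrite /= le_max lexx orbT.
move: H1; rewrite /frame_reward /= => H1.
rewrite /cum_reward in IH; rewrite -natr1 mulrDl mul1r; lra.
Qed.

Lemma frame_len_gt0 : (0 < frame_len tau)%N.
Proof. by rewrite /frame_len; elim/big_ind: _ => // x y; rewrite lcmn_gt0 => -> ->. Qed.

Lemma real_bound sched X (e : R) : 0 < e ->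
  (forall M : nat, exists K, forall k, (K <= k)%N ->
     (M.+1)%:R * debt tau r qs sched X k <= k%:R * qs X) ->
  exists N, forall t, (N <= t)%N ->
    qs X - e <= cum_reward tau r sched X t / (t%:R / (frame_len tau)%:R).
Proof.
move=> e0 H.
have q0 := qs_pos X.
set M := Num.Def.archi_bound (2 * qs X / e).
have hM : 2 * qs X / e < M%:R by apply: archi_boundP; apply: divr_ge0; lra.
have [K HK] := H M.
set T := frame_len tau. have T0 : (0 < T)%N := frame_len_gt0.
exists ((maxn K M).+1 * T)%N => t Nt.
set k := (t %/ T)%N.
have kT : (k * T <= t)%N by rewrite leq_trunc_div.
have tk : (t < k.+1 * T)%N by rewrite ltn_ceil.
have kK : (K <= k)%N.
  have : ((maxn K M).+1 * T <= k.+1 * T)%N by apply: leq_trans (ltnW tk).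
  by rewrite leq_mul2r (negbTE (lt0n_neq0 T0)) /= ltnS geq_max => /andP[].
have kM : (M <= k)%N.
  have : ((maxn K M).+1 * T <= k.+1 * T)%N by apply: leq_trans (ltnW tk).
  by rewrite leq_mul2r (negbTE (lt0n_neq0 T0)) /= ltnS geq_max => /andP[].
have hd := HK k kK.
have hc := cum_frames sched X k.
have hm := @cum_reward_mono sched X _ _ kT.
have c0 : 0 <= cum_reward tau r sched X t.
  have := @cum_reward_mono sched X _ _ (leq0n t).
  by rewrite /cum_reward big_geq.
have t0 : (0 < t)%N.
  apply: leq_trans Nt; rewrite muln_gt0 T0 andbT //.
have Mk : (M%:R : R) <= k%:R by rewrite ler_nat.
have tR : (t%:R : R) < k.+1%:R * T%:R by rewrite -natrM ltr_nat.
have TR : (0 : R) < T%:R by rewrite ltr0n.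
have tR0 : (0 : R) < t%:R by rewrite ltr0n.
have d0 := debt_ge0 sched X k.
have hM' : 2 * qs X < M%:R * e by rewrite -ltr_pdivrMr.
have h2 : 2 * debt tau r qs sched X k <= k%:R * e.
  have : (M.+1)%:R * (2 * debt tau r qs sched X k) <= (M.+1)%:R * (k%:R * e).
    have k0 : (0:R) <= k%:R by [].
    have e1 : k%:R * (2 * qs X) <= k%:R * (M%:R * e) by rewrite ler_wpM2l // ltW.
    have e2 : 0 <= k%:R * e by rewrite mulr_ge0 // ltW.
    rewrite -natr1 in hd *. nra.
  by rewrite ler_pM2l // ltr0n.
have h3 : qs X * 2 <= k%:R * e.
  have : M%:R * e <= k%:R * e by rewrite ler_pM2r.
  lra.
rewrite invf_div mulrA ler_pdivlMr //.
have [qe|qe] := lerP 0 (qs X - e).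
  apply: (@le_trans _ _ ((qs X - e) * (k.+1%:R * T%:R))); first by rewrite ler_wpM2l // ltW.
  rewrite mulrA ler_pM2r // -natr1; nra.
apply: (@le_trans _ _ 0); first by nra.
by apply: mulr_ge0 => //; apply: ltW.
Qed.

Lemma avg_meets sched X :
  (forall M : nat, exists K, forall k, (K <= k)%N ->
     (M.+1)%:R * debt tau r qs sched X k <= k%:R * qs X) ->
  avg_reward_meets tau r qs sched X.
Proof.
move=> H; rewrite /avg_reward_meets limn_einf_lim.
rewrite (cvg_lim _ (@cvg_einfs_sup _ _)) //.
apply/lee_subgt0Pr => e e0.
have [N HN] := @real_bound sched X e e0 H.
apply: (@le_trans _ _ (einfs (fun t => (cum_reward tau r sched X t /
   (t%:R / (frame_len tau)%:R))%:E) N)); last first.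
  by apply: ereal_sup_ubound; exists N.
apply: le_ereal_inf_tmp => _ [m /= Nm <-].
by rewrite lee_fin; apply: HN.
Qed.


Definition zst : {ffun S -> R} := [ffun _ => 0].

Lemma debt_incr sched X v n :
  debt tau r qs sched X (v + n) <= debt tau r qs sched X v + n%:R * qs X.
Proof.
elim: n => [|n IH]; first by rewrite addn0 mul0r addr0.
rewrite addnS; apply: le_trans (debt_step _ _ _) _.
by rewrite -natr1 mulrDl mul1r addrA lerD2r.
Qed.

Lemma det_bound sched X (M : nat) :
  (forall s, sys_state tau r qs sched s = zst ->
     exists i, (1 <= i)%N /\ sys_state tau r qs sched (s + i) = zst) ->
  (exists s0, forall s, (s0 <= s)%N -> sys_state tau r qs sched s = zst ->
     exists i, [/\ (1 <= i)%N, (i <= s %/ M.+1)%N & sys_state tau r qs sched (s + i) = zst]) ->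
  exists K, forall k, (K <= k)%N ->
     (M.+1)%:R * debt tau r qs sched X k <= k%:R * qs X.
Proof.
move=> Hret [s0 Hs0].
set D := sys_state tau r qs sched.
have D0 : D 0%N = zst by apply/ffunP => Y; rewrite !ffunE.
have vis n : exists v, (n <= v)%N /\ D v = zst.
  elim: n => [|n [v [nv Dv]]]; first by exists 0%N.
  have [i [i1 Di]] := Hret v Dv; exists (v + i)%N; split => //; lia.
have [v1 [sv1 Dv1]] := vis s0.
exists v1 => k v1k.
have exP : exists v, (v <= k)%N && (D v == zst) by exists v1; rewrite v1k Dv1 eqxx.
have ubP : forall v, (v <= k)%N && (D v == zst) -> (v <= k)%N by move=> v /andP[].
case: (ex_maxnP exP ubP) => v /andP[vk /eqP Dv] vmax.
have v1v : (v1 <= v)%N by apply: vmax; rewrite /= v1k Dv1 eqxx.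
have [i [i1 im Di]] := Hs0 v (leq_trans sv1 v1v) Dv.
have kv : (k < v + i)%N.
  rewrite ltnNge; apply/negP => hk.
  have : (v + i <= v)%N by apply: vmax; rewrite /= hk /D Di eqxx.
  lia.
have dv : debt tau r qs sched X v = 0.
  by have := congr1 (fun F : {ffun S -> R} => F X) Dv; rewrite /D /zst !ffunE.
have hd := debt_incr sched X v (k - v).
rewrite subnKC // dv add0r in hd.
have hn : (M.+1 * (k - v) <= k)%N.
  have h1 : (k - v <= v %/ M.+1)%N by lia.
  apply: (leq_trans (leq_mul (leqnn M.+1) h1)).
  rewrite mulnC; apply: (leq_trans (leq_trunc_div _ _)); lia.
have q0 := qs_pos X.
apply: (le_trans (ler_wpM2l _ hd)); first by [].
rewrite mulrA -natrM; apply: ler_wpM2r; first exact: ltW.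
by rewrite ler_nat.
Qed.

End PartA.
Section PartB.
Variables (R : realType) (S : finType).
Variables (tau : S -> nat) (r : S -> nat -> R) (qs : S -> R).

Definition pfx (N : nat) (s : nat -> option S) : {ffun 'I_N -> option S} :=
  [ffun i => s (nat_of_ord i)].
Definition ext N (pi : {ffun 'I_N -> option S}) : nat -> option S :=
  fun u => if @insub _ (fun u => u < N)%N 'I_N u is Some i then pi i else None.
Arguments ext {N}.

Lemma ext_pfx N s u : (u < N)%N -> ext (pfx N s) u = s u.
Proof. by move=> h; rewrite /ext insubT /= ffunE. Qed.

Lemma exec_prefix s1 s2 X u : (forall u', (u' <= u)%N -> s1 u' = s2 u') ->
  exec_count tau s1 X u = exec_count tau s2 X u.
Proof.
move=> H; rewrite /exec_count big_nat_cond [RHS]big_nat_cond.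
by apply: eq_bigr => i /andP[/andP[_ hi] _]; rewrite H.
Qed.

Lemma slot_prefix s1 s2 X u : (forall u', (u' <= u)%N -> s1 u' = s2 u') ->
  slot_reward tau r s1 X u = slot_reward tau r s2 X u.
Proof. by move=> H; rewrite /slot_reward H // (@exec_prefix s1 s2 X u H). Qed.

Lemma debt_prefix s1 s2 X k : (forall u, (u < k * frame_len tau)%N -> s1 u = s2 u) ->
  debt tau r qs s1 X k = debt tau r qs s2 X k.
Proof.
elim: k => [//|k IH] H /=.
rewrite IH; last first.
  by move=> u hu; apply: H; apply: (leq_trans hu); rewrite leq_mul2r leqnSn orbT.
congr (Num.max _ (_ - _)); rewrite /frame_reward big_nat_cond [RHS]big_nat_cond.
apply: eq_bigr => u /andP[/andP[_ hu] _]; apply: slot_prefix => u' hu'.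
by apply: H; apply: leq_ltn_trans hu.
Qed.

Lemma state_prefix s k :
  sys_state tau r qs s k = sys_state tau r qs (ext (pfx (k * frame_len tau) s)) k.
Proof.
apply/ffunP => X; rewrite !ffunE; apply: debt_prefix => u hu.
by rewrite ext_pfx.
Qed.

Lemma meas_state d (Omega : measurableType d) (sched : Omega -> nat -> option S)
  (sched_meas : forall t a, measurable [set w | sched w t = a]) k v :
  measurable [set w | sys_state tau r qs (sched w) k = v].
Proof.
set N := (k * frame_len tau)%N.
have -> : [set w | sys_state tau r qs (sched w) k = v] =
  \bigcup_(pi in [set pi | sys_state tau r qs (ext pi) k = v])
     \bigcap_(i in [set: 'I_N]) [set w | sched w i = pi i].
  apply/seteqP; split => w /=.
    move=> h; exists (pfx N (sched w)); first by rewrite /= -state_prefix.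
    by move=> i _ /=; rewrite ffunE.
  move=> [pi /= hpi hw]; rewrite state_prefix.
  suff -> : pfx N (sched w) = pi by [].
  by apply/ffunP => i; rewrite ffunE; apply: hw.
apply: fin_bigcup_measurable; first exact: finite_finset.
move=> pi _; apply: fin_bigcap_measurable; first exact: finite_finset.
by move=> i _; apply: sched_meas.
Qed.

End PartB.
Section PartC.
Variables (R : realType) (V : choiceType) (C : set V) (p : V -> V -> R) (z0 : V).
Hypothesis p_ge0 : forall x y, (0 <= p x y)%R.
Hypothesis p_sum1 : forall x, C x -> (\esum_(y in C) (p x y)%:E = 1)%E.
Hypothesis Cz0 : C z0.
Local Open Scope ereal_scope.

Fixpoint hh (j : nat) (x : V) : \bar R :=
  match j with
  | 0 => 1
  | j'.+1 => \esum_(y in C `\ z0) ((p x y)%:E * hh j' y)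
  end.

Lemma hh_ge0 j x : 0 <= hh j x.
Proof.
elim: j x => [|j IH] x /=; first by [].
by apply: esum_ge0 => y _; rewrite mule_ge0 // lee_fin.
Qed.

Lemma fp_ge0 n x y : 0 <= first_pass C p n x y.
Proof.
elim: n x => [|[|n] IH] x //=; first exact: (p_ge0 x y).
by apply: esum_ge0 => z _; apply: mule_ge0; [exact: p_ge0 | exact: IH].
Qed.

Lemma hh_id j x : C x -> hh j x + \sum_(1 <= i < j.+1) first_pass C p i x z0 = 1.
Proof.
elim: j x => [|j IH] x Cx; first by rewrite big_geq // adde0.
rewrite big_ltn // big_add1 /=.
have E : \sum_(1 <= i < j.+1) first_pass C p i.+1 x z0 =
   \sum_(1 <= i < j.+1) \esum_(y in C `\ z0) ((p x y)%:E * first_pass C p i y z0).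
  rewrite big_nat_cond [RHS]big_nat_cond; apply: eq_bigr => i /andP[/andP[i1 _] _].
  by case: i i1.
rewrite E addeCA -esum_sum; last by move=> y i _ _; apply: mule_ge0; [exact: p_ge0 | exact: fp_ge0].
rewrite -esumD; last 2 first.
- by move=> y _; apply: mule_ge0; [exact: p_ge0 | exact: hh_ge0].
- by move=> y _; apply: sume_ge0 => i _; apply: mule_ge0; [exact: p_ge0 | exact: fp_ge0].
rewrite (eq_esum (b := fun y => (p x y)%:E)); last first.
  move=> y [Cy _]; rewrite -ge0_sume_distrr; last by move=> i _; apply: fp_ge0.
  by rewrite -ge0_muleDr ?hh_ge0 ?sume_ge0 // ?IH ?mule1 // => i _; apply: fp_ge0.
rewrite -(@p_sum1 x Cx) [RHS](esumID [set z0]); last by move=> y _; rewrite lee_fin.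
have -> : C `&` [set z0] = [set z0] by apply/seteqP; split => y /=; [case|move=> ->].

by rewrite esum_set1 ?lee_fin // setDE.
Qed.

End PartC.
Section MeasHelp.
Context d (Omega : measurableType d) (R : realType) (mu : {measure set Omega -> \bar R}).
Local Open Scope ereal_scope.

Lemma sub_list (I : Type) (l : seq I) (F : I -> set Omega) :
  (forall i, measurable (F i)) ->
  mu (\big[setU/set0]_(i <- l) F i) <= \sum_(i <- l) mu (F i).
Proof.
move=> mF; elim: l => [|a l IH]; first by rewrite !big_nil measure0.
have mU : measurable (\big[setU/set0]_(i <- l) F i).
  by apply: bigsetU_measurable => i _; apply: mF.
rewrite !big_cons; apply: le_trans (measureU2 mu (mF a) mU) _.
by rewrite leeD2l.
Qed.

Lemma add_list (I : choiceType) (l : seq I) (F : I -> set Omega) :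
  (forall i, measurable (F i)) -> uniq l ->
  (forall i j, i != j -> F i `&` F j = set0) ->
  mu (\big[setU/set0]_(i <- l) F i) = \sum_(i <- l) mu (F i).
Proof.
move=> mF; elim: l => [|a l IH]; first by rewrite !big_nil measure0.
move=> /= /andP[al ul] dis.
have mU : measurable (\big[setU/set0]_(i <- l) F i).
  by apply: bigsetU_measurable => i _; apply: mF.
rewrite !big_cons measureU //; first by congr (_ + _); apply: IH.
apply/seteqP; split => // w [Fa]; rewrite -bigcup_seq => -[i /= il Fi].
have ai : a != i by apply: contraNneq al => ->.
by have := dis _ _ ai; move/seteqP => [+ _] => /(_ w (conj Fa Fi)).
Qed.

End MeasHelp.

Section PartD.
Variables (R : realType) (V : choiceType) (d : measure_display) (Omega : measurableType d)
  (P : probability Omega R) (D : Omega -> nat -> V) (C : set V) (p : V -> V -> R) (z0 : V).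
Hypothesis HM : is_markov_chain P D C p.
Hypothesis Dmeas : forall k v, measurable [set w | D w k = v].
Hypothesis Dfin : forall s, exists L : seq (seq V),
  forall w, [seq D w i | i <- iota 0 s.+1] \in L.
Local Open Scope ereal_scope.

Definition cyl s (x : nat -> V) := [set w | forall i, (i <= s)%N -> D w i = x i].
Definition fut s j := [set w | forall i, (1 <= i)%N -> (i <= j)%N -> D w (s + i)%N <> z0].

Lemma meas_cyl s x : measurable (cyl s x).
Proof.
have -> : cyl s x = \bigcap_(i in [set i | (i <= s)%N]) [set w | D w i = x i].
  by apply/seteqP; split => w /= h i hi; apply: h.
by apply: bigcap_measurable; [exists 0%N | move=> i _; apply: Dmeas].
Qed.

Lemma meas_fut s j : measurable (fut s j).
Proof.
have -> : fut s j = \bigcap_(i in [set i | (i <= j)%N])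
    [set w | (1 <= i)%N -> D w (s + i)%N <> z0].
  by apply/seteqP; split => w /= h i; [move=> hi h1; apply: h | move=> h1 hi; apply: h].
apply: bigcap_measurable; first by exists 0%N.
move=> [|i] _.
  by have -> : [set w | (1 <= 0)%N -> D w (s + 0)%N <> z0] = setT
    by apply/seteqP; split => w //=.
have -> : [set w | (1 <= i.+1)%N -> D w (s + i.+1)%N <> z0] =
   ~` [set w | D w (s + i.+1)%N = z0] by apply/seteqP; split => w /= h; [apply: h|].
exact/measurableC/Dmeas.
Qed.

Lemma D1 j : forall s x, P (cyl s x `&` fut s j) <= P (cyl s x) * hh C p z0 j (x s).
Proof.
have [_ DC p_ge0 p_sum1 Hmk] := HM.
elim: j => [|j IH] s x.
  rewrite /= mule1; apply: le_measure; rewrite ?inE; first exact: measurableI (meas_cyl _ _) (meas_fut _ _).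
  - exact: meas_cyl.
  - by apply: subIsetl.
have [hC|hC] := pselect (forall i, (i <= s)%N -> C (x i)); last first.
  have -> : cyl s x = set0.
    by apply/seteqP; split => // w hw; apply: hC => i hi; rewrite -(hw i hi); apply: DC.
  by rewrite set0I measure0 mul0e.
have [L HL] := Dfin s.+1.
set Ys := [seq y <- undup [seq nth z0 t s.+1 | t <- L] | (y != z0) && `[< C y >]].
set x' := fun y i => if i == s.+1 then y else x i.
have cylE y : cyl s (x' y) = cyl s x.
  apply/seteqP; split => w /= h i hi; rewrite h //= /x'.
    by rewrite ifF //; apply/negbTE; rewrite neq_ltn ltnS hi.
  by rewrite ifF //; apply/negbTE; rewrite neq_ltn ltnS hi.
have cover : cyl s x `&` fut s j.+1 `<=`
    \big[setU/set0]_(y <- Ys) (cyl s.+1 (x' y) `&` fut s.+1 j).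
  move=> w [hc hf]; rewrite -bigcup_seq; exists (D w s.+1).
    rewrite /= /Ys mem_filter mem_undup; apply/andP; split.
      apply/andP; split; last by apply/asboolP; apply: DC.
      by apply/eqP; have := hf 1%N (leqnn 1) (ltn0Sn j); rewrite addn1.
    have -> : D w s.+1 = nth z0 [seq D w i | i <- iota 0 s.+2] s.+1.
      by rewrite (nth_map 0%N) ?size_iota // nth_iota.
    exact: map_f.
  split.
    move=> i hi; rewrite /x'; case: eqP => [->//|/eqP ne].
    by apply: hc; rewrite -ltnS ltn_neqAle ne hi.
  move=> i i1 ij; have := hf i.+1 (ltn0Sn _) ij; by rewrite addnS addSn.
apply: (le_trans (le_measure _ _ _ cover)); rewrite ?inE.
- exact: measurableI (meas_cyl _ _) (meas_fut _ _).
- by apply: bigsetU_measurable => y _; exact: measurableI (meas_cyl _ _) (meas_fut _ _).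
apply: (le_trans (sub_list _ _ _)).
  by move=> y; exact: measurableI (meas_cyl _ _) (meas_fut _ _).
apply: (@le_trans _ _ (\sum_(y <- Ys) (P (cyl s x) * ((p (x s) y)%:E * hh C p z0 j y)))).
  rewrite big_seq [X in _ <= X]big_seq; apply: lee_sum => y.
  rewrite /Ys mem_filter => /andP[/andP[yz /asboolP Cy] _].
  apply: (le_trans (IH s.+1 (x' y))).
  have -> : x' y s.+1 = y by rewrite /x' eqxx.
  rewrite /cyl Hmk; last first.
    move=> i hi; rewrite /x'; case: eqP => // /eqP ne.
    by apply: hC; rewrite -ltnS ltn_neqAle ne hi.
  rewrite -/(cyl s (x' y)) cylE /x' eqxx ifF; last by apply/negbTE; rewrite neq_ltn ltnSn.
  by rewrite muleA.
rewrite -ge0_sume_distrr; last by move=> y _; apply: mule_ge0; [exact: p_ge0 | exact: hh_ge0].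
apply: lee_wpmul2l; first exact: measure_ge0.
rewrite /= fsbig_seq; last by rewrite filter_uniq // undup_uniq.
apply: esum_ge; exists [set` Ys] => //; split; first exact: finite_seq.
move=> y /=; rewrite /Ys mem_filter => /andP[/andP[yz /asboolP Cy] _].
by split => //; move=> /= E; rewrite E eqxx in yz.
Qed.


Lemma D2 s j : P ([set w | D w s = z0] `&` fut s j) <= hh C p z0 j z0.
Proof.
have [_ DC p_ge0 p_sum1 Hmk] := HM.
have [L HL] := Dfin s.
set Ts := undup L.
set sw := fun w => [seq D w i | i <- iota 0 s.+1].
set cT := fun t : seq V => [set w | sw w = t].
have cTE t : size t = s.+1 -> cT t = cyl s (nth z0 t).
  move=> st; apply/seteqP; split => w /=.
    by move=> <- i hi; rewrite /sw (nth_map 0%N) ?size_iota ?ltnS // nth_iota ?ltnS.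
  move=> h; apply: (@eq_from_nth _ z0); first by rewrite size_map size_iota st.
  move=> i; rewrite size_map size_iota => hi.
  by rewrite (nth_map 0%N) ?size_iota // nth_iota // add0n; apply: h; rewrite -ltnS.
have cT0 t : size t != s.+1 -> cT t = set0.
  move=> st; apply/seteqP; split => w //= E.
  by move: st; rewrite -E size_map size_iota eqxx.
have mcT t : measurable (cT t).
  have [st|st] := eqVneq (size t) s.+1; first by rewrite cTE //; exact: meas_cyl.
  by rewrite cT0.
set G := [set w | D w s = z0] `&` fut s j.
have mG : measurable G by apply: measurableI; [exact: Dmeas | exact: meas_fut].
have cover : G `<=` \big[setU/set0]_(t <- Ts) (G `&` cT t).
  move=> w Gw; rewrite -bigcup_seq; exists (sw w) => //.
  by rewrite /= mem_undup HL.
apply: (le_trans (le_measure _ _ _ cover)); rewrite ?inE //.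
  by apply: bigsetU_measurable => t _; exact: measurableI.
apply: (le_trans (sub_list _ _ _)); first by move=> t; exact: measurableI.
apply: (@le_trans _ _ (\sum_(t <- Ts) (P (cT t) * hh C p z0 j z0))).
  apply: lee_sum => t _.
  have hge : 0 <= P (cT t) * hh C p z0 j z0 by apply: mule_ge0; [exact: measure_ge0 | exact: hh_ge0].
  have [st|st] := eqVneq (size t) s.+1; last by rewrite cT0 // setI0 !measure0 mul0e.
  have [tz|tz] := eqVneq (nth z0 t s) z0; last first.
    have -> : G `&` cT t = set0.
      apply/seteqP; split => // w [[/= Dz _]]; rewrite (cTE _ st) => hw.
      by move: tz; rewrite -(hw s (leqnn s)) Dz eqxx.
    by rewrite measure0.
  rewrite (cTE _ st); have := D1 j s (nth z0 t); rewrite tz => h.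
  apply: le_trans h.
  apply: le_measure; rewrite ?inE.
  - by apply: measurableI => //; exact: meas_cyl.
  - by apply: measurableI; [exact: meas_cyl | exact: meas_fut].
  - by move=> w [[_ hf] hc].
rewrite -ge0_sume_distrl; last by move=> t _; exact: measure_ge0.
rewrite -add_list //; last 2 first.
- exact: undup_uniq.
- move=> t1 t2 ne; apply/seteqP; split => // w [/= E1 E2].
  by move: ne; rewrite -E1 -E2 eqxx.
rewrite -[X in _ <= X]mul1e; apply: lee_wpmul2r; first exact: hh_ge0.
apply: probability_le1; by apply: bigsetU_measurable => t _.
Qed.

End PartD.
Section PartE.
Variables (R : realType) (V : choiceType) (C : set V) (p : V -> V -> R) (z0 : V).
Hypothesis p_ge0 : forall x y, (0 <= p x y)%R.
Hypothesis p_sum1 : forall x, C x -> (\esum_(y in C) (p x y)%:E = 1)%E.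
Hypothesis Cz0 : C z0.
Hypothesis fsum1 : (\esum_(n in [set: nat]) first_pass C p n z0 z0 = 1)%E.
Hypothesis fmean : (\esum_(n in [set: nat]) ((n%:R)%:E * first_pass C p n z0 z0) < +oo)%E.
Local Open Scope ereal_scope.

Let f i := first_pass C p i z0 z0.
Let f0 i : 0 <= f i. Proof. exact: fp_ge0. Qed.

Lemma series1 : \sum_(i <oo) f i = 1.
Proof. by rewrite nneseries_esumT // fsum1. Qed.

Lemma hh_tail n : hh C p z0 n z0 = \sum_(n.+1 <= i <oo) f i.
Proof.
have h := hh_id p_ge0 p_sum1 Cz0 n Cz0.
have := series1; rewrite (@nneseries_split _ _ 0 n.+1); last by move=> k _; exact: f0.
rewrite add0n big_ltn // /f /= add0e.
set S := \sum_(1 <= i < n.+1) _; set T := \sum_(n.+1 <= i <oo) _ => h2.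
have S0 : 0 <= S by apply: sume_ge0 => i _; exact: fp_ge0.
have S1 : S <= 1 by rewrite -h leeDr // hh_ge0.
have Sf : S \is a fin_num by rewrite ge0_fin_numE // (le_lt_trans S1) // ltey.
have H : hh C p z0 n z0 + S = T + S by rewrite h -h2 addeC.
rewrite -[hh C p z0 n z0](addeK _ Sf) H addeK //.
Qed.

Lemma sume_cst (c : \bar R) n : 0 <= c -> \sum_(0 <= s < n) c = (n%:R)%:E * c.
Proof.
move=> c0; elim: n => [|n IH]; first by rewrite big_geq // mul0e.
rewrite big_nat_recr //= IH -natr1 EFinD ge0_muleDl ?lee_fin // mul1e //.
Qed.

Lemma series_bound m : (0 < m)%N ->
  \sum_(s <oo) hh C p z0 (s %/ m) z0 <=
  (m%:R)%:E * \sum_(i <oo) ((i%:R)%:E * f i).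
Proof.
move=> m0.
have E s : hh C p z0 (s %/ m) z0 = \sum_(i <oo) (if (s %/ m < i)%N then f i else 0).
  rewrite hh_tail eseries_cond.
  rewrite -(eq_eseriesl _ (P := fun i => true && (s %/ m < i)%N)) //.
  by rewrite eseries_mkcondr.
rewrite (eq_eseriesr (fun s _ => E s)).
rewrite nneseries_interchange; last by move=> i j; case: ifP.
rewrite -nneseriesZl; last by move=> i _; apply: mule_ge0 => //; rewrite lee_fin.
apply: lee_nneseries; first by move=> i _ _; apply: nneseries_ge0 => j _ _; case: ifP.
move=> i _.
rewrite (@nneseries_split _ _ 0 (i * m)); last by move=> k _; case: ifP.
rewrite eseries0 ?adde0; last by move=> k; rewrite add0n ltn_divLR // ltnNge => ->.
rewrite add0n big_nat_cond.
rewrite (eq_bigr (fun _ => f i)); last by move=> k /andP[/andP[_ hk] _]; rewrite ltn_divLR // hk.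
by rewrite -big_nat_cond sume_cst // muleA -EFinM -natrM mulnC.
Qed.

Lemma series_fin : \sum_(i <oo) ((i%:R)%:E * f i) < +oo.
Proof. by rewrite nneseries_esumT //; move=> n; apply: mule_ge0 => //; rewrite lee_fin. Qed.



Lemma hh_inf x : (forall j, x <= hh C p z0 j z0) -> x <= 0.
Proof.
move=> H.
have fin : \sum_(0 <= k <oo | xpredT k) f k < +oo.
  by have := series1; rewrite /= => ->; rewrite ltry.
have cv := @nneseries_tail_cvg R f xpredT fin (fun k _ => f0 k).
rewrite -(cvg_lim _ cv) //; apply: lime_ge; first by apply/cvg_ex; exists 0.
exists 1%N => // N /= N1.
have -> : N = N.-1.+1 by rewrite prednK.
by rewrite -hh_tail.
Qed.

End PartE.
Theorem lemma3 (R : realType) (S : finType)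
  (tau : S -> nat) (r : S -> nat -> R) (qs : S -> R)
  (tau_pos : forall X, (0 < tau X)%N)
  (r_noninc : forall X i, (1 <= i)%N -> (i < tau X)%N -> r X i.+1 <= r X i)
  (r_nonneg : forall X, 0 <= r X (tau X))
  (qs_pos : forall X, 0 < qs X)
  (d : measure_display) (Omega : measurableType d) (P : probability Omega R)
  (sched : Omega -> nat -> option S)
  (sched_meas : forall t a, measurable [set w | sched w t = a])
  (C : set {ffun S -> R}) (p : {ffun S -> R} -> {ffun S -> R} -> R)
  (Hmarkov : is_markov_chain P (fun w k => sys_state tau r qs (sched w) k) C p)
  (Hirr : irreducible C p)
  (Hpos : positive_recurrent C p) :
  {ae P, forall w, forall X : S, avg_reward_meets tau r qs (sched w) X}.
Proof.
set D := fun w k => sys_state tau r qs (sched w) k.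
have [cC DC p_ge0 p_sum1 Hmk] := Hmarkov.
set z0 := zst R S.
have D0 w : D w 0%N = z0 by apply/ffunP => Y; rewrite !ffunE.
have [w0 _] : [set: Omega] !=set0.
  case: (eqVneq [set: Omega] set0) => [E|/set0P//].
  have := probability_setT P; rewrite E measure0 => /eqP.
  by rewrite eq_sym eqe oner_eq0.
have Cz0 : C z0 by rewrite -(D0 w0); apply: DC.
have [fsum1 fmean] := Hpos z0 Cz0.
have Dmeas : forall k v, measurable [set w | D w k = v].
  by move=> k v; apply: meas_state.
have Dfin : forall s, exists L : seq (seq {ffun S -> R}),
    forall w, [seq D w i | i <- iota 0 s.+1] \in L.
  move=> s; set N := (s * frame_len tau)%N.
  exists [seq [seq sys_state tau r qs (ext pi) i | i <- iota 0 s.+1]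
         | pi <- enum {ffun 'I_N -> option S}].
  move=> w.
  have -> : [seq D w i | i <- iota 0 s.+1] =
            [seq sys_state tau r qs (ext (pfx N (sched w))) i | i <- iota 0 s.+1].
    apply/eq_in_map => i; rewrite mem_iota add0n => /andP[_ hi].
    apply/ffunP => X; rewrite !ffunE; apply: debt_prefix => u hu.
    rewrite ext_pfx //; apply: (leq_trans hu).
    by rewrite leq_mul2r -ltnS hi orbT.
  by apply: map_f; rewrite mem_enum.
set FM := fun (M : nat) (s : nat) => [set w | D w s = z0] `&` fut D z0 s (s %/ M.+1).
have mFM M s : measurable (FM M s).
  by apply: measurableI; [exact: Dmeas | exact: meas_fut].
have nullM M : P (lim_sup_set (FM M)) = 0%E.
  apply: lim_sup_set_cvg0; first exact: mFM.
  apply: (@le_lt_trans _ _ (\sum_(s <oo) hh C p z0 (s %/ M.+1) z0)%E).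
    apply: lee_nneseries; first by move=> i _ _; exact: measure_ge0.
    by move=> n _; apply: D2.
  apply: (le_lt_trans (series_bound p_ge0 p_sum1 Cz0 fsum1 (ltn0Sn M))).
  apply: lte_mul_pinfty => //.
  exact: series_fin.
set Nev := fun s => [set w | D w s = z0] `&` \bigcap_j fut D z0 s j.
have mNev s : measurable (Nev s).
  apply: measurableI; first exact: Dmeas.
  by apply: bigcapT_measurable => j; exact: meas_fut.
have nullN s : P (Nev s) = 0%E.
  apply/eqP; rewrite eq_le measure_ge0 andbT.
  apply: (hh_inf p_ge0 p_sum1 Cz0 fsum1) => j.
  apply: (le_trans _ (D2 z0 Hmarkov Dmeas Dfin s j)).
  apply: le_measure; rewrite ?inE //.
    by apply: measurableI; [exact: Dmeas | exact: meas_fut].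
  by move=> w [h1 h2]; split => //; apply: h2.
set Nall := (\bigcup_M lim_sup_set (FM M)) `|` (\bigcup_s Nev s).
have negN : P.-negligible Nall.
  apply: negligibleU.
    apply: negligible_bigcup => M; apply/negligibleP; last exact: nullM.
    apply: bigcap_measurable; first by exists 0%N.
    by move=> n _; apply: bigcup_measurable => k _; exact: mFM.
  by apply: negligible_bigcup => s; apply/negligibleP; [exact: mNev | exact: nullN].
apply: negligibleS negN => w /= notQ.
apply: contrapT => notN; apply: notQ => X.
have hM M : ~ lim_sup_set (FM M) w by move=> h; apply: notN; left; exists M.
have hN s : ~ Nev s w by move=> h; apply: notN; right; exists s.
apply: avg_meets => // M.
apply: det_bound => //.
  move=> s Ds; apply: contrapT => hno; apply: (hN s); split => // j _ i i1 ij.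
  by move=> E; apply: hno; exists i.
have := hM M; rewrite /lim_sup_set => /existsNP [s0 hs0].
exists s0 => s s0s Ds.
apply: contrapT => hno; apply: hs0; exists s => //; split => // i i1 ij E.
by apply: hno; exists i.
Qed.
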